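(* Let $N,M,D\ge 1$ and let $T:\mathbb{R}^{M}\times\cdots\times\mathbb{R}^{M}\to\mathbb{R}^D$ ($N$ factors) be a real $N$-linear map, written $T(a^{(1)},\dots,a^{(N)})_i=\sum_{s\in\{1,\dots,M\}^N}T_{i,s}\prod_{k=1}^N a^{(k)}_{s_k}$, which is a contraction with respect to the Euclidean norm, i.e. $\|T(a^{(1)},\dots,a^{(N)})\|\le\prod_{k=1}^N\|a^{(k)}\|$ for all $a^{(1)},\dots,a^{(N)}\in\mathbb{R}^M$. Then every local hidden variable (LHV) model satisfies $$\Big\|\big\langle T(A^{(1)},\dots,A^{(N)})\big\rangle\Big\|^2\le\Big\langle\prod_{k=1}^N\|A^{(k)}\|^2\Big\rangle,$$ i.e. $\sum_{i=1}^D\Big(\sum_{s}T_{i,s}\big\langle\prod_{k}A^{(k)}_{s_k}\big\rangle\Big)^2\le\sum_{s}\big\langle\prod_k (A^{(k)}_{s_k})^2\big\rangle$, whenever the right-hand side is finite.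
   Context: Setting: $N$ parties, each with $M$ observables. An LHV model is a probability space $(\Lambda,\mu)$ together with real-valued measurable functions $A^{(k)}_j:\Lambda\to\mathbb{R}$ ($k=1,\dots,N$ the site, $j=1,\dots,M$ the observable), $A^{(k)}_j(\lambda)$ being the value assigned to the $j$-th observable at site $k$; $A^{(k)}=(A^{(k)}_1,\dots,A^{(k)}_M)\in\mathbb{R}^M$, and $\langle\cdot\rangle$ denotes expectation with respect to $\mu$. $\|\cdot\|$ is the Euclidean norm. *)

(* Defs.v *)
From HB Require Import structures.
From mathcomp Require Import all_boot all_order all_algebra.
From mathcomp Require Import all_classical all_reals all_analysis.
Set Implicit Arguments. Unset Strict Implicit. Unset Printing Implicit Defensive.
Import Order.TTheory GRing.Theory Num.Theory.
Local Open Scope ring_scope.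

Definition enorm (R : realType) (M : nat) (v : 'I_M -> R) : R :=
  Num.sqrt (\sum_(j < M) v j ^+ 2).

Definition multilin (R : realType) (N M D : nat)
  (Tc : 'I_D -> {ffun 'I_N -> 'I_M} -> R) (a : 'I_N -> 'I_M -> R) (i : 'I_D) : R :=
  \sum_(s : {ffun 'I_N -> 'I_M}) Tc i s * \prod_(k < N) a k (s k).

(* Main.v *)
Require Import Defs.
From HB Require Import structures.
From mathcomp Require Import all_boot all_order all_algebra.
From mathcomp Require Import all_classical all_reals all_analysis.
From mathcomp Require Import lra measurable_realfun.
Import Order.TTheory GRing.Theory Num.Theory.
Local Open Scope ring_scope.

Lemma sq_int_le (R : realType) d (Omega : measurableType d) (P : probability Omega R)
  (f : Omega -> R) (mf : measurable_fun setT f)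
  (i2 : P.-integrable setT (EFin \o (fun x => f x ^+ 2))) :
  (((fine (\int[P]_x (f x)%:E)) ^+ 2)%:E <= \int[P]_x (f x ^+ 2)%:E)%E.
Proof.
have icst : forall c : R, P.-integrable setT (EFin \o (fun _ : Omega => c)).
  by move=> c; exact: finite_measure_integrable_cst.
have i1 : P.-integrable setT (EFin \o f).
  apply: (@le_integrable _ _ _ P setT measurableT _ (EFin \o (fun x => f x ^+ 2 + 1))).
  - exact/measurable_EFinP.
  - move=> x _ /=; rewrite /= lee_fin [X in _ <= X]ger0_norm; last first.
      by rewrite addr_ge0 ?sqr_ge0.
    rewrite -real_normK ?num_real //.
    have := normr_ge0 (f x); nra.
  - have -> : (EFin \o (fun x => f x ^+ 2 + 1)) = (EFin \o (fun x => f x ^+ 2)) \+ (EFin \o (fun _ => 1)).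
      by apply/funext => x /=.
    exact: integrableD.
set c := fine _.
have -> : (\int[P]_x (f x ^+ 2)%:E)%E = (\int[P]_x (f x ^+ 2))%:E.
  by rewrite /Rintegral fineK // integrable_fin_num.
rewrite lee_fin.
have h0 : 0 <= \int[P]_x ((f x ^+ 2 + c ^+ 2) - (2 * c) * f x).
  apply: Rintegral_ge0 => x _.
  have -> : f x ^+ 2 + c ^+ 2 - 2 * c * f x = (f x - c) ^+ 2 by rewrite sqrrB; lra.
  exact: sqr_ge0.
rewrite RintegralB // in h0; last first.
  have -> : (EFin \o (fun x => 2 * c * f x)) = (fun x => (2 * c)%:E * (EFin \o f) x)%E.
    by apply/funext => x /=; rewrite EFinM.
  exact: integrableZl.
  have -> : (EFin \o (fun x => f x ^+ 2 + c ^+ 2)) = (EFin \o (fun x => f x ^+ 2)) \+ (EFin \o (fun _ => c ^+ 2)).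
      by apply/funext => x /=.
  exact: integrableD.
rewrite RintegralD // Rintegral_cst // in h0.
rewrite (RintegralZl (2 * c) measurableT i1) in h0.
have hP : fine (P setT) = 1 by rewrite probability_setT.
rewrite hP in h0.
have hc : \int[P]_x f x = c by [].
rewrite hc in h0.
lra.
Qed.

Local Open Scope ereal_scope.

Theorem proposition1 (R : realType) (N M D : nat)
  (hN : (0 < N)%N) (hM : (0 < M)%N) (hD : (0 < D)%N)
  (Tc : 'I_D -> {ffun 'I_N -> 'I_M} -> R)
  (hT : forall a : 'I_N -> 'I_M -> R,
      (enorm (multilin Tc a) <= \prod_(k < N) enorm (a k))%R)
  (d : measure_display) (Omega : measurableType d) (P : probability Omega R)
  (A : 'I_N -> 'I_M -> Omega -> R)
  (hA : forall k j, measurable_fun setT (A k j))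
  (hfin : \int[P]_x (\prod_(k < N) enorm (fun j => A k j x) ^+ 2)%:E < +oo) :
  ((enorm (fun i => fine (\int[P]_x (multilin Tc (fun k j => A k j x) i)%:E)))
     ^+ 2)%:E
  <= \int[P]_x (\prod_(k < N) enorm (fun j => A k j x) ^+ 2)%:E.
Proof.
set Y := fun i x => multilin Tc (fun k j => A k j x) i.
set X2 := fun x => (\prod_(k < N) enorm (fun j => A k j x) ^+ 2)%R.
have mY : forall i, measurable_fun setT (Y i).
  move=> i; rewrite /Y /multilin.
  apply: measurable_sum => s; apply: measurable_funM => //.
  by apply: measurable_prod => k _; exact: hA.
have eX2 : X2 = fun x => (\prod_(k < N) \sum_(j < M) A k j x ^+ 2)%R.
  apply/funext => x; rewrite /X2; apply: eq_bigr => k _.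
  by rewrite /enorm sqr_sqrtr // sumr_ge0 // => j _; exact: sqr_ge0.
have mX2 : measurable_fun setT X2.
  rewrite eX2; apply: measurable_prod => k _; apply: measurable_sum => j.
  exact: measurable_funX.
have X20 : forall x, (0 <= X2 x)%R.
  by move=> x; rewrite /X2; apply: prodr_ge0 => k _; exact: sqr_ge0.
have pw : forall x, (\sum_(i < D) Y i x ^+ 2 <= X2 x)%R.
  move=> x; have h := hT (fun k j => A k j x).
  have -> : (\sum_(i < D) Y i x ^+ 2 = enorm (multilin Tc (fun k j => A k j x)) ^+ 2)%R.
    by rewrite /enorm sqr_sqrtr // sumr_ge0 // => i _; exact: sqr_ge0.
  rewrite /X2 prodrXl !expr2; apply: ler_pM => //; rewrite /enorm ?sqrtr_ge0 //.
have iX2 : P.-integrable setT (EFin \o X2).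
  apply/integrableP; split; first exact/measurable_EFinP.
  under eq_integral => x _ do rewrite /= ger0_norm ?X20 //.
  exact: hfin.
have iY2 : forall i, P.-integrable setT (EFin \o (fun x => Y i x ^+ 2)%R).
  move=> i; apply: (le_integrable measurableT _ _ iX2).
    by apply/measurable_EFinP; exact: measurable_funX.
  move=> x _ /=; rewrite !ger0_norm ?lee_fin ?sqr_ge0 ?X20 //.
  apply: (le_trans _ (pw x)); rewrite (bigD1 i) //= lerDl.
  by apply: sumr_ge0 => j _; exact: sqr_ge0.
rewrite /enorm sqr_sqrtr; last by apply: sumr_ge0 => i _; exact: sqr_ge0.
rewrite -sumEFin.
apply: (@le_trans _ _ (\sum_(i < D) \int[P]_x ((Y i x) ^+ 2)%:E)).
  by apply: lee_sum => i _; exact: (@sq_int_le _ _ _ P _ (mY i) (iY2 i)).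
rewrite -ge0_integral_sum //; last first.
  - by move=> i x _; rewrite lee_fin sqr_ge0.
  - by move=> i; apply/measurable_EFinP; exact: measurable_funX.
apply: ge0_le_integral => //.
- by move=> x _; apply: sume_ge0 => i _; rewrite lee_fin sqr_ge0.
- by apply: emeasurable_sum => i; apply/measurable_EFinP; exact: measurable_funX.
- exact/measurable_EFinP.
- by move=> x _; rewrite sumEFin lee_fin; exact: pw.
Qed.
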